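(* Let $G=(V,E)$ be a graph with $n=|V|$ and $m=|E|$, and let $k$ be a positive integer. Construct $G'=(V',E')$ as follows: replace each vertex $u\in V$ by a path $u_1u_2u_3$; for each edge $e=uv\in E$ add four new vertices $e_u,e_v,e_w,e_z$ with edges $e_ue_v,e_ve_w,e_we_u,e_we_z$, and add the edges $u_3e_u$ and $v_3e_v$. Let $M=\{u_2u_3:u\in V\}\cup\{e_ue_w:e=uv\in E\}$ (choosing, for each edge $e$, one fixed endpoint labelled $u$). Then $M$ is a maximal matching of $G'$ with $|M|=n+m$, and $G$ has an independent set of at least $k$ vertices (equivalently a vertex cover of at most $n-k$ vertices) if and only if $G'$ has a vertex cover with at most $2|M|-k=2n+2m-k$ vertices.
   Context: A vertex cover of a graph is a set of vertices containing at least one endpoint of every edge. A matching is maximal if no edge of the graph can be added to it while keeping it a matching. *)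

(* Defs.v *)
From mathcomp Require Import all_boot.
Set Implicit Arguments. Unset Strict Implicit. Unset Printing Implicit Defensive.

Definition vertex_cover (T : finType) (adj : rel T) (C : {set T}) : Prop :=
  forall x y, adj x y -> (x \in C) || (y \in C).

Definition independent_set (T : finType) (adj : rel T) (S : {set T}) : Prop :=
  forall x y, x \in S -> y \in S -> ~~ adj x y.

(* A matching is a set of edges (stored as pairs) no two distinct of which
   share an endpoint (this also excludes storing both (x,y) and (y,x)). *)
Definition is_matching (T : finType) (adj : rel T) (M : {set T * T}) : Prop :=
  (forall p, p \in M -> adj p.1 p.2) /\
  (forall p q, p \in M -> q \in M -> p != q ->
     [/\ p.1 != q.1, p.1 != q.2, p.2 != q.1 & p.2 != q.2]).

Definition maximal_matching (T : finType) (adj : rel T) (M : {set T * T}) : Prop :=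
  is_matching adj M /\
  (forall x y, adj x y -> (x, y) \notin M -> (y, x) \notin M ->
     ~ is_matching adj (M :|: [set (x, y)])).

(* The input graph G: vertices V, edges E, each edge e having endpoints
   ends e = (u, v); the first component is the fixed endpoint labelled u. *)
Definition simple_graph (V E : finType) (ends : E -> V * V) : Prop :=
  (forall e, (ends e).1 != (ends e).2) /\
  (forall e f, (ends e == ends f) || (ends e == ((ends f).2, (ends f).1)) -> e = f).

Definition adjG (V E : finType) (ends : E -> V * V) : rel V :=
  fun x y => [exists e, (ends e == (x, y)) || (ends e == (y, x))].

(* The constructed graph G'. Vertex u_i is inl (u, i-1) (i = 1,2,3);
   gadget vertices e_u, e_v, e_w, e_z are inr (e,0), inr (e,1), inr (e,2), inr (e,3). *)
Definition Vp (V E : finType) : finType := ((V * 'I_3) + (E * 'I_4))%type.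

Definition o3 (i : nat) (H : i < 3) : 'I_3 := Ordinal H.
Definition o4 (i : nat) (H : i < 4) : 'I_4 := Ordinal H.

Definition baseGp (V E : finType) (ends : E -> V * V) (x y : Vp V E) : bool :=
  match x, y with
  | inl (u, i), inl (u', j) =>
      (u == u') && (((val i == 0) && (val j == 1)) || ((val i == 1) && (val j == 2)))
  | inr (e, i), inr (e', j) =>
      (e == e') && [|| (val i == 0) && (val j == 1), (val i == 1) && (val j == 2),
                       (val i == 2) && (val j == 0) | (val i == 2) && (val j == 3)]
  | inl (x0, i), inr (e, j) =>
      (val i == 2) && (((val j == 0) && (x0 == (ends e).1)) ||
                       ((val j == 1) && (x0 == (ends e).2)))
  | inr _, inl _ => false
  end.

Definition adjGp (V E : finType) (ends : E -> V * V) : rel (Vp V E) :=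
  fun x y => baseGp ends x y || baseGp ends y x.

Definition Mmatch (V E : finType) : {set Vp V E * Vp V E} :=
  [set ((inl (u, @o3 1 isT), inl (u, @o3 2 isT)) : Vp V E * Vp V E) | u : V] :|:
  [set ((inr (e, @o4 0 isT), inr (e, @o4 2 isT)) : Vp V E * Vp V E) | e : E].

(* Main.v *)
Require Import Defs.
From mathcomp Require Import all_boot.
Set Implicit Arguments. Unset Strict Implicit. Unset Printing Implicit Defensive.

Section S.
Variables (V E : finType) (ends : E -> V * V).

Definition vL (u : V) (i : nat) (H : i < 3) : Vp V E := inl (u, Ordinal H).
Definition vR (e : E) (j : nat) (H : j < 4) : Vp V E := inr (e, Ordinal H).

Definition aA (A : {set Vp V E}) (u : V) : nat :=
  (vL u (i:=0) isT \in A) + (vL u (i:=1) isT \in A) + (vL u (i:=2) isT \in A).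
Definition bA (A : {set Vp V E}) (e : E) : nat :=
  (vR e (j:=0) isT \in A) + (vR e (j:=1) isT \in A) + (vR e (j:=2) isT \in A)
  + (vR e (j:=3) isT \in A).

Lemma card_Vp (A : {set Vp V E}) : #|A| = \sum_u aA A u + \sum_e bA A e.
Proof.
rewrite -sum1_card big_mkcond big_sumType /=.
congr (_ + _).
  rewrite (eq_bigr (fun u => \sum_(i < 3) if @inl _ (E * 'I_4) (u, i) \in A then 1 else 0)).
    by rewrite pair_bigA; apply: eq_bigr; case.
  move=> u _; rewrite /aA !big_ord_recl big_ord0 /vL addn0 !addnA.
  rewrite (_ : lift ord0 (lift ord0 ord0) = Ordinal (n:=3) (m:=2) isT); last exact: val_inj.
  rewrite (_ : lift ord0 ord0 = Ordinal (n:=3) (m:=1) isT); last exact: val_inj.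
  rewrite (_ : ord0 = Ordinal (n:=3) (m:=0) isT); last exact: val_inj.
  by repeat congr (_ + _); case: (_ \in A).
rewrite (eq_bigr (fun u => \sum_(i < 4) if @inr (V * 'I_3) _ (u, i) \in A then 1 else 0)).
  by rewrite pair_bigA; apply: eq_bigr; case.
move=> u _; rewrite /bA !big_ord_recl big_ord0 /vR addn0 !addnA.
rewrite (_ : lift ord0 (lift ord0 (lift ord0 ord0)) = Ordinal (n:=4) (m:=3) isT); last exact: val_inj.
rewrite (_ : lift ord0 (lift ord0 ord0) = Ordinal (n:=4) (m:=2) isT); last exact: val_inj.
rewrite (_ : lift ord0 ord0 = Ordinal (n:=4) (m:=1) isT); last exact: val_inj.
rewrite (_ : ord0 = Ordinal (n:=4) (m:=0) isT); last exact: val_inj.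
by repeat congr (_ + _); case: (_ \in A).
Qed.

Definition own (x : Vp V E) : V + E :=
  match x with inl (u, _) => inl u | inr (e, _) => inr e end.
Definition mk (o : V + E) : Vp V E * Vp V E :=
  match o with
  | inl u => (vL u (i:=1) isT, vL u (i:=2) isT)
  | inr e => (vR e (j:=0) isT, vR e (j:=2) isT) end.

Lemma memM p : p \in Mmatch V E -> p = mk (own p.1) /\ p = mk (own p.2).
Proof. by case/setUP => /imsetP [u _ ->]. Qed.

Lemma mkM o : mk o \in Mmatch V E.
Proof.
case: o => [u|e]; apply/setUP; [left|right]; apply/imsetP; [by exists u | by exists e].
Qed.

Definition covered (x : Vp V E) : bool :=
  match x with inl (_, i) => val i != 0 | inr (_, j) => (val j == 0) || (val j == 2) end.

Lemma coveredP x : covered x -> x = (mk (own x)).1 \/ x = (mk (own x)).2.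
Proof.
case: x => [[u [[|[|[|i]]] Hi]]|[e [[|[|[|[|i]]]] Hi]]] //= _;
  by [left; rewrite /vR /vL; do 2 f_equal; apply: val_inj
     |right; rewrite /vR /vL; do 2 f_equal; apply: val_inj].
Qed.

Lemma cov x y : adjGp ends x y -> covered x || covered y.
Proof.
case: x => [[u [[|[|[|i]]] Hi]]|[e [[|[|[|[|i]]]] Hi]]] //;
case: y => [[u' [[|[|[|i']]] Hi']]|[e' [[|[|[|[|i']]]] Hi']]] //;
by rewrite /adjGp /= ?andbF ?andFb.
Qed.

Lemma matchM : maximal_matching (adjGp ends) (Mmatch V E).
Proof.
split.
  split.
    move=> p /memM [-> _]; case: (own p.1) => [u|e]; by rewrite /adjGp /vL /vR /= ?eqxx.
  move=> p q hp hq pq; have [hp1 hp2] := memM hp; have [hq1 hq2] := memM hq.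
  split; apply: contra_neq pq => h.
  - by rewrite hp1 hq1 h.
  - by rewrite hp1 hq2 h.
  - by rewrite hp2 hq1 h.
  - by rewrite hp2 hq2 h.
move=> x y hxy hn1 hn2 [_ hm].
have pM : (x, y) \in Mmatch V E :|: [set (x, y)] by rewrite !inE eqxx orbT.
case/orP: (cov hxy) => /coveredP hc.
  have qM : mk (own x) \in Mmatch V E :|: [set (x, y)] by rewrite inE mkM.
  have pq : (x, y) != mk (own x).
    by apply/eqP => e; move: hn1; rewrite e mkM.
  have [h1 h2 h3 h4] := hm _ _ pM qM pq.
  by case: hc => hc; [move: h1 | move: h2]; rewrite /= -hc eqxx.
have qM : mk (own y) \in Mmatch V E :|: [set (x, y)] by rewrite inE mkM.
have pq : (x, y) != mk (own y).
  by apply/eqP => e; move: hn1; rewrite e mkM.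
have [h1 h2 h3 h4] := hm _ _ pM qM pq.
by case: hc => hc; [move: h3 | move: h4]; rewrite /= -hc eqxx.
Qed.

Lemma cardM : #|Mmatch V E| = #|V| + #|E|.
Proof.
rewrite /Mmatch cardsU.
have -> : [set ((inl (u, @o3 1 isT), inl (u, @o3 2 isT)) : Vp V E * Vp V E) | u : V] :&:
  [set ((inr (e, @o4 0 isT), inr (e, @o4 2 isT)) : Vp V E * Vp V E) | e : E] = set0.
  apply/setP => p; rewrite !inE; apply/negP => /andP [/imsetP [u _ ->] /imsetP [e _]] //.
rewrite cards0 subn0 !card_imset //.
  by move=> e e' [].
by move=> u u' [].
Qed.

Lemma part3 k :
  (exists S : {set V}, independent_set (adjG ends) S /\ k <= #|S|) <->
  (exists C : {set V}, vertex_cover (adjG ends) C /\ #|C| + k <= #|V|).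
Proof.
split.
  move=> [S [hS hk]]; exists (~: S); split.
    move=> x y hxy; rewrite !inE; case: (boolP (x \in S)) => hx //=; case: (boolP (y \in S)) => hy //=.
    by move: (hS x y hx hy); rewrite hxy.
  by rewrite -(cardsC S) addnC leq_add2r.
move=> [C [hC hk]]; exists (~: C); split.
  move=> x y hx hy; apply/negP => h; move: (hC x y h).
  by rewrite !inE in hx hy; rewrite (negbTE hx) (negbTE hy).
by rewrite -(cardsC C) leq_add2l in hk.
Qed.

Definition Cp (C : {set V}) : {set Vp V E} :=
  [set x | match x with
           | inl (u, i) => (val i == 1) || ((val i == 2) && (u \in C))
           | inr (e, j) => (val j == 2) || ((val j == 0) && ((ends e).1 \notin C))
                           || ((val j == 1) && ((ends e).1 \in C)) end].

Lemma Cp_cover (C : {set V}) : (forall e, ((ends e).1 \in C) || ((ends e).2 \in C)) ->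
  vertex_cover (adjGp ends) (Cp C).
Proof.
move=> hC.
have base : forall x y, baseGp ends x y -> (x \in Cp C) || (y \in Cp C).
  case=> [[u [[|[|[|i]]] Hi]]|[e [[|[|[|[|i]]]] Hi]]] //;
  case=> [[u' [[|[|[|i']]] Hi']]|[e' [[|[|[|[|i']]]] Hi']]] //;
  rewrite /= !inE /= ?andbF ?andbT ?orbF ?orbT //.
  all: try by move/eqP => ->; case: (_ \in C).
  all: try by move/eqP => <-; case: (_ \in C).
  all: try by move=> /eqP ->; rewrite hC.
  all: try by move=> h; rewrite (eqP h) orbC hC.
by move=> x y /orP [h|h]; [exact: base | rewrite orbC; exact: base].
Qed.

Lemma sum_mem (T : finType) (A : {set T}) : \sum_(x : T) ((x \in A) : nat) = #|A|.
Proof.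
rewrite -sum1_card [RHS]big_mkcond; apply: eq_bigr => x _; by case: (x \in A).
Qed.

Lemma sum_one (T : finType) : \sum_(x : T) 1 = #|T|.
Proof. by rewrite sum_nat_const muln1. Qed.

Lemma card_Cp (C : {set V}) : #|Cp C| = #|V| + #|C| + 2 * #|E|.
Proof.
have h1 : \sum_u aA (Cp C) u = \sum_u (1 + ((u \in C) : nat)).
  apply: eq_bigr => u _; rewrite /aA /vL !inE /=; by case: (u \in C).
have h2 : \sum_e bA (Cp C) e = \sum_(e : E) 2.
  apply: eq_bigr => e _; rewrite /bA /vR !inE /=; by case: (_ \in C).
by rewrite card_Vp h1 h2 big_split /= sum_one sum_mem sum_nat_const mulnC.
Qed.

Lemma gadget (u1 u2 u3 v1 v2 v3 c0 c1 c2 c3 : bool) :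
  u1 || u2 -> u2 || u3 -> v1 || v2 -> v2 || v3 -> c0 || c1 -> c1 || c2 ->
  c2 || c0 -> c2 || c3 -> u3 || c0 -> v3 || c1 -> c0 + c1 + c2 + c3 < 3 ->
  (2 <= u1 + u2 + u3) || (2 <= v1 + v2 + v3).
Proof.
by case: u1; case: u2; case: u3; case: v1; case: v2; case: v3;
   case: c0; case: c1; case: c2; case: c3.
Qed.

Lemma bnd_a (a b c : bool) : a || b -> 1 + (2 <= a + b + c) <= a + b + c.
Proof. by case: a; case: b; case: c. Qed.

Lemma bnd_b (a b c d : bool) : a || b -> b || c -> c || a ->
  2 + (3 <= a + b + c + d) <= a + b + c + d.
Proof. by case: a; case: b; case: c; case: d. Qed.

Lemma part4_conv (Cq : {set Vp V E}) : vertex_cover (adjGp ends) Cq ->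
  exists C : {set V}, vertex_cover (adjG ends) C /\
     #|V| + #|C| + 2 * #|E| <= #|Cq|.
Proof.
move=> hq.
pose X := [set u | 2 <= aA Cq u].
pose F := [set e | 3 <= bA Cq e].
exists (X :|: [set (ends e).1 | e in F]); split.
  have key : forall e, ((ends e).1 \in X :|: [set (ends e).1 | e in F]) ||
                       ((ends e).2 \in X :|: [set (ends e).1 | e in F]).
    move=> e; case: (boolP (e \in F)) => eF.
      by rewrite inE (imset_f _ eF) orbT.
    rewrite !inE.
    suff : (2 <= aA Cq (ends e).1) || (2 <= aA Cq (ends e).2).
      by case/orP => ->; rewrite ?orbT.
    rewrite inE -ltnNge in eF.
    move: eF; rewrite /aA /bA => eF.
    apply: gadget eF; apply: hq; by rewrite /adjGp /vL /vR /= ?eqxx ?orbT.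
  move=> x y /existsP [e /orP [/eqP he | /eqP he]]; have := key e; rewrite he //.
  by rewrite orbC.
apply: (@leq_trans (#|V| + (#|X| + #|F|) + 2 * #|E|)).
  rewrite leq_add2r leq_add2l.
  apply: leq_trans (leq_card_setU _ _) _.
  by rewrite leq_add2l leq_imset_card.
have hA : #|V| + #|X| <= \sum_u aA Cq u.
  rewrite -sum_mem -sum_one -big_split /=; apply: leq_sum => u _.
  rewrite inE /aA; apply: bnd_a; apply: hq; by rewrite /adjGp /vL /= ?eqxx.
have hB : 2 * #|E| + #|F| <= \sum_e bA Cq e.
  rewrite -sum_mem -sum_one big_distrr -big_split /=; apply: leq_sum => e _.
  rewrite inE muln1 /bA; apply: bnd_b; apply: hq; by rewrite /adjGp /vR /= ?eqxx ?orbT.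
rewrite card_Vp.
by rewrite addnA addnAC -addnA; exact: leq_add hA hB.
Qed.
End S.

Theorem mainTheorem10 (V E : finType) (ends : E -> V * V) (k : nat) :
  simple_graph ends -> 0 < k ->
  [/\ maximal_matching (adjGp ends) (Mmatch V E),
      #|Mmatch V E| = #|V| + #|E|,
      (exists S : {set V}, independent_set (adjG ends) S /\ k <= #|S|) <->
      (exists C : {set V}, vertex_cover (adjG ends) C /\ #|C| + k <= #|V|)
    & (exists S : {set V}, independent_set (adjG ends) S /\ k <= #|S|) <->
      (exists C : {set Vp V E}, vertex_cover (adjGp ends) C /\
                                #|C| + k <= 2 * #|Mmatch V E|)].
Proof.
move=> _ _; split; [exact: matchM | exact: cardM | exact: part3 | ].
rewrite cardM; split.
  move=> /(proj1 (part3 ends k)) [C [hC hk]]; exists (Cp ends C); split.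
    apply: Cp_cover => e; apply: hC; apply/existsP; exists e.
    by rewrite -surjective_pairing eqxx.
  by rewrite card_Cp addnAC mulnDr leq_add2r mul2n -addnn -addnA leq_add2l.
move=> [Cq [hq hk]]; apply/(proj2 (part3 ends k)).
have [C [hC hc]] := part4_conv hq; exists C; split => //.
have := leq_trans (leq_add hc (leqnn k)) hk.
by rewrite addnAC mulnDr leq_add2r mul2n -addnn -addnA leq_add2l.
Qed.
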